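(* There exist an environment (a state space $\mathcal{X}$, a control set $\mathcal{U}$, an initial state distribution, Markovian stochastic stationary dynamics $p(\mathbf{x}_{t+1}\mid \mathbf{x}_t,\mathbf{u}_t)$, a time horizon $T$ and a surrogate loss $l$), a supervisor policy $\pi^*:\mathcal{X}\to\mathcal{U}$, and a policy class $\{\pi_\theta:\theta\in\Theta\}$ such that, with $\theta_{HC}^N$ and $\theta_{RC}^N$ as defined in the context: (i) there is a $\theta^*\in\Theta$ which is the unique minimizer over $\theta\in\Theta$ of $E_{p(\tau\mid\theta)}[J(\theta,\tau)]$; (ii) $\lim_{N\to\infty}\theta_{HC}^N=\theta^*$ with probability $1$; (iii) for every number $m\ge 1$ of initial supervisor demonstrations, $\lim_{N\to\infty}\theta_{RC}^N\neq\theta^*$ with probability at least $c\,e^{-m}$, where $c>0$ is a universal constant. In other words, even with infinite data the robot-centric procedure may converge to a suboptimal policy while the human-centric procedure converges to the unique best policy in the class.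
   Context: Setting: a robot task has state space $\mathcal{X}$, control set $\mathcal{U}$, an initial state density $p(\mathbf{x}_0)$ and Markovian, stochastic, stationary dynamics $p(\mathbf{x}_{t+1}\mid\mathbf{u}_t,\mathbf{x}_t)$. A trajectory of horizon $T$ is $\tau=((\mathbf{x}_0,\mathbf{u}_0),\dots,(\mathbf{x}_T,\mathbf{u}_T))$. A policy is a map $\pi:\mathcal{X}\to\mathcal{U}$; a parametrized policy class is $\{\pi_\theta:\theta\in\Theta\}$, and rolling out $\pi_\theta$ induces the trajectory density $p(\tau\mid\theta)=p(\mathbf{x}_0)\prod_{t}p(\mathbf{x}_{t+1}\mid\mathbf{u}_t,\mathbf{x}_t)p(\mathbf{u}_t\mid\mathbf{x}_t,\theta)$. A supervisor policy $\pi^*$ (not necessarily in the class) labels states with controls. A surrogate loss $l:\mathcal{U}\times\mathcal{U}\to\mathbb{R}_{\ge 0}$ (e.g. the $0/1$ loss) measures disagreement of controls, and the trajectory loss is $J(\theta,\tau)=\sum_{t} l(\pi_\theta(\mathbf{x}_t),\pi^*(\mathbf{x}_t))$, summed over the states $\mathbf{x}_t$ of $\tau$. Human-centric (HC) learning: the supervisor provides $N$ demonstration trajectories $\tau^1,\dots,\tau^N$ sampled i.i.d. by rolling out the supervisor's policy $\pi^*$, and $\theta_{HC}^N\in\arg\min_{\theta\in\Theta}\sum_{i=1}^N J(\theta,\tau^i)$. Robot-centric (RC) learning (DAgger with no mixing): start with a dataset $\mathcal{D}$ of all state–control pairs from $m$ supervisor demonstration trajectories (rolled out under $\pi^*$).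 Iterate: (Step 1) compute $\theta_k\in\arg\min_{\theta\in\Theta}\sum_{(\mathbf{x},\mathbf{u})\in\mathcal{D}_k} l(\pi_\theta(\mathbf{x}),\mathbf{u})$, each pair weighted equally; (Step 2) roll out the robot's current policy $\pi_{\theta_k}$ in the environment, have the supervisor label every visited state $\mathbf{x}_t$ with its control $\pi^*(\mathbf{x}_t)$, and add these labeled pairs to the dataset to form $\mathcal{D}_{k+1}$. $\theta_{RC}^N$ denotes the policy produced by this procedure after $N$ iterations (i.e., trained on the $m$ initial demonstrations plus $N$ robot rollouts with supervisor labels). *)

(* Defs.v *)
From mathcomp Require Import all_boot all_order all_algebra.
From mathcomp Require Import all_classical all_reals all_analysis.
Set Implicit Arguments. Unset Strict Implicit. Unset Printing Implicit Defensive.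
Import Order.TTheory GRing.Theory Num.Theory.
Local Open Scope ring_scope.
Local Open Scope classical_set_scope.

(* A trajectory of horizon T is the sequence of states x_0, ..., x_T.
   Controls are determined by the (deterministic) rolled-out policy:
   u_t = pi(x_t); supervisor labels are pi^*(x_t). *)
Notation traj X T := {ffun 'I_T.+1 -> X}.

Definition is_distr (R : realType) (X : finType) (p : X -> R) : Prop :=
  (forall x, 0 <= p x) /\ \sum_(x : X) p x = 1.

Definition ptraj (R : realType) (X U : finType) (T : nat) (p0 : X -> R)
  (Pdyn : X -> U -> X -> R) (pi : X -> U) (tau : traj X T) : R :=
  p0 (tau ord0) *
  \prod_(t < T) Pdyn (tau (widen_ord (leqnSn T) t))
                     (pi (tau (widen_ord (leqnSn T) t)))
                     (tau (lift ord0 t)).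

Definition Jloss (R : realType) (X U Θ : finType) (T : nat)
  (l : U -> U -> R) (psup : X -> U) (pol : Θ -> X -> U)
  (th : Θ) (tau : traj X T) : R :=
  \sum_(t < T.+1) l (pol th (tau t)) (psup (tau t)).

Definition exp_loss (R : realType) (X U Θ : finType) (T : nat) (p0 : X -> R)
  (Pdyn : X -> U -> X -> R) (l : U -> U -> R) (psup : X -> U)
  (pol : Θ -> X -> U) (th : Θ) : R :=
  \sum_(tau : traj X T) ptraj p0 Pdyn (pol th) tau * Jloss l psup pol th tau.

Definition labeled (X U : finType) (T : nat) (psup : X -> U)
  (taus : seq (traj X T)) : seq (X * U) :=
  flatten [seq [seq ((tau : traj X T) t, psup ((tau : traj X T) t)) | t <- enum 'I_T.+1]
          | tau : traj X T <- taus].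

Definition emp_loss (R : realType) (X U Θ : finType) (l : U -> U -> R)
  (pol : Θ -> X -> U) (D : seq (X * U)) (th : Θ) : R :=
  \sum_(p <- D) l (pol th p.1) p.2.

(* sel is an arbitrary rule returning, for every dataset, a minimizer of the
   empirical loss (the "theta in argmin" of the paper). *)
Definition argmin_rule (R : realType) (X U Θ : finType) (l : U -> U -> R)
  (pol : Θ -> X -> U) (sel : seq (X * U) -> Θ) : Prop :=
  forall D th, emp_loss l pol D (sel D) <= emp_loss l pol D th.

Definition hc_theta (X U Θ : finType) (T : nat) (psup : X -> U)
  (sel : seq (X * U) -> Θ) (taus : nat -> traj X T) (N : nat) : Θ :=
  sel (labeled psup [seq taus i | i <- iota 0 N]).

Definition rc_theta (X U Θ : finType) (T : nat) (psup : X -> U)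
  (sel : seq (X * U) -> Θ) (m : nat) (demos rolls : nat -> traj X T) (k : nat) : Θ :=
  sel (labeled psup ([seq demos j | j <- iota 0 m] ++ [seq rolls i | i <- iota 0 k])).

(* Law of the HC data: taus 0, taus 1, ... are i.i.d. with density ptr
   (every finite-dimensional cylinder event is measurable with the product
   probability). *)
Definition hc_law (R : realType) (d : measure_display) (Ω : measurableType d)
  (P : probability Ω R) (X : finType) (T : nat) (ptr : traj X T -> R)
  (taus : nat -> Ω -> traj X T) : Prop :=
  forall (n : nat) (s : nat -> traj X T),
    let E := [set w | forall i, (i < n)%N -> taus i w = s i] in
    measurable E /\ P E = (\prod_(i < n) ptr (s i))%:E.

(* Law of the RC (DAgger, no mixing) data: m i.i.d. supervisor demonstrations
   demos 0 .. demos (m-1) with density psup_tr, then rollouts rolls 0, rolls 1, ...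
   where, conditionally on the past, rolls k has density ptr_pol (theta_k) with
   theta_k the policy trained on the data collected before rollout k. *)
Definition rc_law (R : realType) (d : measure_display) (Ω : measurableType d)
  (P : probability Ω R) (X U Θ : finType) (T : nat) (psup : X -> U)
  (sel : seq (X * U) -> Θ) (psup_tr : traj X T -> R)
  (ptr_pol : Θ -> traj X T -> R) (m : nat)
  (demos rolls : nat -> Ω -> traj X T) : Prop :=
  forall (n : nat) (dd rr : nat -> traj X T),
    let E := [set w | (forall j, (j < m)%N -> demos j w = dd j) /\
                      (forall i, (i < n)%N -> rolls i w = rr i)] in
    measurable E /\
    P E = ((\prod_(j < m) psup_tr (dd j)) *
           \prod_(i < n) ptr_pol (rc_theta psup sel m dd rr i) (rr i))%:E.

(* convergence in the finite (discrete) parameter set: eventually equal *)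
Definition ev_eq (A : Type) (u : nat -> A) (a : A) : Prop :=
  exists N0, forall N, (N0 <= N)%N -> u N = a.

(* Main.v *)
Require Import Defs.
From mathcomp Require Import all_boot all_order all_algebra.
From mathcomp Require Import all_classical all_reals all_analysis.
From mathcomp Require Import zify.
Import Order.TTheory GRing.Theory Num.Theory.
Local Open Scope ring_scope.
Local Open Scope classical_set_scope.

Definition s0 : 'I_4 := ord0.
Definition nxt (u : 'I_5) : 'I_4 :=
  inord (match val u with 0 => 1 | 1 => 2 | 2 => 3 | _ => 1 end)%N.
Definition fdyn (x : 'I_4) (u : 'I_5) : 'I_4 := if x == s0 then nxt u else x.
Definition ex_p0 (R : realType) (x : 'I_4) : R := (x == s0)%:R.
Definition ex_Pdyn (R : realType) (x : 'I_4) (u : 'I_5) (y : 'I_4) : R :=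
  (y == fdyn x u)%:R.
Definition ex_psup (x : 'I_4) : 'I_5 := ord0.
Definition ex_pol (b : bool) (x : 'I_4) : 'I_5 :=
  inord (nth 0 (if b then [:: 1; 0; 2; 4] else [:: 2; 0; 0; 2]) x)%N.
Definition ex_l (R : realType) (u v : 'I_5) : R := (val u)%:R.
Definition trajOf (pi : 'I_4 -> 'I_5) : traj 'I_4 1 :=
  [ffun t : 'I_2 => if val t == 0%N then s0 else fdyn s0 (pi s0)].
Definition Ln (b : bool) (tau : traj 'I_4 1) : nat :=
  (\sum_(t < 2) val (ex_pol b (tau t)))%N.

Lemma C1 : Ln true (trajOf ex_psup) = 1%N /\ Ln false (trajOf ex_psup) = 2%N.
Proof. split; rewrite /Ln !big_ord_recr big_ord0 /= !ffunE /=.  all: by rewrite /fdyn /s0 eqxx /nxt /ex_pol /= !inordK. Qed.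
Lemma C2 b : Ln true (trajOf (ex_pol b)) = (Ln false (trajOf (ex_pol b))).+1.
Proof. by case: b; rewrite /Ln !big_ord_recr !big_ord0 /= !ffunE /fdyn /s0 eqxx /nxt /ex_pol /= !inordK. Qed.
Lemma C3 : Ln true (trajOf (ex_pol true)) = 3%N /\ Ln false (trajOf (ex_pol false)) = 4%N.
Proof. split; rewrite /Ln !big_ord_recr big_ord0 /= !ffunE /=.  all: by rewrite /fdyn /s0 eqxx /nxt /ex_pol /= !inordK. Qed.

Lemma L1 (R : realType) (pi : 'I_4 -> 'I_5) (tau : traj 'I_4 1) :
  ptraj (ex_p0 R) (ex_Pdyn R) pi tau = (tau == trajOf pi)%:R.
Proof.
rewrite /ptraj big_ord1 /ex_p0 /ex_Pdyn.
have -> : widen_ord (leqnSn 1) ord0 = ord0 :> 'I_2 by apply/val_inj.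
have -> : lift ord0 (ord0 : 'I_1) = ord_max :> 'I_2 by apply/val_inj.
rewrite -natrM mulnb; congr (_%:R); congr nat_of_bool.
apply/idP/idP => [/andP[/eqP h0 /eqP h1]|/eqP ->]; last by rewrite !ffunE /= !eqxx.
apply/eqP/ffunP => t; rewrite ffunE; case: t => [[|[|//]] Ht] /=.
  by rewrite -h0; f_equal; apply/val_inj.
by rewrite h0 in h1; rewrite -h1; f_equal; apply/val_inj.
Qed.

Definition En (b : bool) (D : seq ('I_4 * 'I_5)) : nat :=
  (\sum_(p <- D) val (ex_pol b p.1))%N.

Lemma L2 (R : realType) b tau :
  Jloss (ex_l R) ex_psup ex_pol b tau = (Ln b tau)%:R :> R.
Proof. by rewrite /Jloss /Ln natr_sum. Qed.

Lemma L3 (R : realType) D b :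
  emp_loss (ex_l R) ex_pol D b = (En b D)%:R :> R.
Proof. by rewrite /emp_loss /En natr_sum. Qed.

Lemma L4 b taus : En b (labeled ex_psup taus) = (\sum_(tau <- taus) Ln b tau)%N.
Proof.
rewrite /En /labeled big_flatten big_map; apply: eq_bigr => tau _.
by rewrite big_map /Ln enumT.
Qed.

Lemma sum_const (A : Type) (s : seq A) (c : nat) : (\sum_(x <- s) c)%N = (size s * c)%N.
Proof. by elim: s => [|x s IH]; rewrite ?big_nil ?big_cons ?IH //= mulSn. Qed.

Lemma sum_plus1 (s : seq (traj 'I_4 1)) :
  (forall tau, tau \in s -> Ln true tau = (Ln false tau).+1) ->
  (\sum_(tau <- s) Ln true tau = \sum_(tau <- s) Ln false tau + size s)%N.
Proof.
elim: s => [|x s IH] h; first by rewrite !big_nil.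
rewrite !big_cons h ?mem_head // IH /=; last by move=> t ts; apply: h; rewrite inE ts orbT.
by rewrite addnS addSn addnA.
Qed.

Lemma sel_false (R : realType) (sel : seq ('I_4 * 'I_5) -> bool) D :
  argmin_rule (ex_l R) ex_pol sel -> (En false D < En true D)%N -> sel D = false.
Proof.
move=> H lt; case h: (sel D) => //.
have := H D false; rewrite h !L3 ler_nat => le.
by move: lt; rewrite ltnNge le.
Qed.

Lemma sel_true (R : realType) (sel : seq ('I_4 * 'I_5) -> bool) D :
  argmin_rule (ex_l R) ex_pol sel -> (En true D < En false D)%N -> sel D = true.
Proof.
move=> H lt; case h: (sel D) => //.
have := H D true; rewrite h !L3 ler_nat => le.
by move: lt; rewrite ltnNge le.
Qed.

Definition tauS := trajOf ex_psup.
Definition ddS : nat -> traj 'I_4 1 := fun _ => tauS.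

Section RC.
Variables (sel : seq ('I_4 * 'I_5) -> bool) (m : nat).

Fixpoint rrl (k : nat) : seq (traj 'I_4 1) :=
  if k is k'.+1 then
    rcons (rrl k') (trajOf (ex_pol (sel (labeled ex_psup ([seq ddS j | j <- iota 0 m] ++ rrl k')))))
  else [::].

Definition rr (i : nat) := nth tauS (rrl i.+1) i.

Lemma size_rrl k : size (rrl k) = k.
Proof. by elim: k => // k IH /=; rewrite size_rcons IH. Qed.

Lemma rrE0 k : rr k = trajOf (ex_pol (sel (labeled ex_psup ([seq ddS j | j <- iota 0 m] ++ rrl k)))).
Proof. by rewrite /rr /= nth_rcons size_rrl ltnn eqxx. Qed.

Lemma map_rr k : [seq rr i | i <- iota 0 k] = rrl k.
Proof.
elim: k => // k IH.
have -> : iota 0 k.+1 = iota 0 k ++ [:: k] by rewrite -addn1 iotaD.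
by rewrite map_cat IH /= rrE0 cats1.
Qed.

Lemma rcE k : rc_theta ex_psup sel m ddS rr k =
  sel (labeled ex_psup ([seq ddS j | j <- iota 0 m] ++ rrl k)).
Proof. by rewrite /rc_theta map_rr. Qed.

Lemma rrE k : rr k = trajOf (ex_pol (rc_theta ex_psup sel m ddS rr k)).
Proof. by rewrite rcE rrE0. Qed.

End RC.
Lemma cap1 (R : realType) (d : measure_display) (Ω : measurableType d) (P : probability Ω R)
  (E : nat -> set Ω) : (forall n, measurable (E n)) -> (forall n, P (E n) = 1%E) ->
  measurable (\bigcap_n E n) /\ P (\bigcap_n E n) = 1%E.
Proof.
move=> mE PE.
have mA : measurable (\bigcap_n E n) by apply: bigcapT_measurable.
split => //.
have neg : P.-negligible (\bigcup_n ~` E n).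
  apply: negligible_bigcup => n; exists (~` E n); split.
  - exact: measurableC.
  - have h := probability_setC P (mE n).
    by rewrite PE subee // in h.
  - by [].
case: neg => N [mN PN sN].
have h0 : P (~` \bigcap_n E n) = 0%E.
  apply/eqP; rewrite -measure_le0 -PN; apply: le_measure; rewrite ?inE //.
    exact: measurableC.
  by rewrite setC_bigcap.
move: h0; rewrite probability_setC //.
have := probability_le1 P mA; have := measure_ge0 P (\bigcap_n E n).
case: (P _) => [r| |] //=.
move=> _ _ [] /eqP; rewrite subr_eq0 => /eqP <- //.
Qed.

Lemma expE (R : realType) b :
  exp_loss 1 (ex_p0 R) (ex_Pdyn R) (ex_l R) ex_psup ex_pol b = (Ln b (trajOf (ex_pol b)))%:R.
Proof.
rewrite /exp_loss (bigD1 (trajOf (ex_pol b))) //= L1 eqxx mul1r L2 big1 ?addr0 //.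
by move=> tau /negbTE h; rewrite L1 h mul0r.
Qed.

Lemma sum_ind (R : realType) (y : 'I_4) : \sum_(x : 'I_4) ((x == y)%:R : R) = 1.
Proof. by rewrite (bigD1 y) //= eqxx big1 ?addr0 // => x /negbTE ->. Qed.

Theorem theorem1 (R : realType) :
  exists c : R, 0 < c /\
  exists (X U Θ : finType) (p0 : X -> R) (Pdyn : X -> U -> X -> R) (T : nat)
         (l : U -> U -> R) (psup : X -> U) (pol : Θ -> X -> U),
    is_distr p0 /\ (forall x u, is_distr (Pdyn x u)) /\ (forall u v, 0 <= l u v) /\
    exists thstar : Θ,
      (* (i) thstar is the unique minimizer of the expected trajectory loss *)
      (forall th, th != thstar ->
         exp_loss T p0 Pdyn l psup pol thstar < exp_loss T p0 Pdyn l psup pol th) /\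
      forall sel : seq (X * U) -> Θ, argmin_rule l pol sel ->
      (* (ii) HC converges to thstar with probability 1 *)
      (forall (d : measure_display) (Ω : measurableType d) (P : probability Ω R)
              (taus : nat -> Ω -> traj X T),
         hc_law P (ptraj p0 Pdyn psup) taus ->
         exists A : set Ω, measurable A /\ P A = 1%E /\
           A `<=` [set w | ev_eq (hc_theta psup sel (fun i => taus i w)) thstar]) /\
      (* (iii) RC converges to a policy other than thstar with prob >= c e^{-m} *)
      (forall m : nat, (1 <= m)%N ->
       forall (d : measure_display) (Ω : measurableType d) (P : probability Ω R)
              (demos rolls : nat -> Ω -> traj X T),
         rc_law P psup sel (ptraj p0 Pdyn psup)
                (fun th => ptraj p0 Pdyn (pol th)) m demos rolls ->
         exists A : set Ω, measurable A /\ ((c * expR (- m%:R))%:E <= P A)%E /\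
           A `<=` [set w | exists th' : Θ, th' != thstar /\
              ev_eq (rc_theta psup sel m (fun j => demos j w) (fun i => rolls i w)) th']).
Proof.
exists 1; split; first exact: ltr01.
exists 'I_4, 'I_5, bool, (ex_p0 R), (ex_Pdyn R), 1%N, (ex_l R), ex_psup, ex_pol.
split; first by split => [x|]; rewrite /ex_p0 ?ler0n ?sum_ind.
split; first by move=> x u; split => [y|]; rewrite /ex_Pdyn ?ler0n ?sum_ind.
split; first by move=> u v; rewrite /ex_l ler0n.
exists true; split.
  case => // _; rewrite !expE; have [-> ->] := C3; by rewrite ltr_nat.
move=> sel Hsel; split.
- move=> d Ω P taus Hlaw.
  pose E n := [set w | forall i, (i < n)%N -> taus i w = tauS].
  have [mA PA] : measurable (\bigcap_n E n) /\ P (\bigcap_n E n) = 1%E.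
    apply: cap1 => n; have [mE PE] := Hlaw n (fun _ => tauS) => //.
    rewrite PE big1 // => i _; by rewrite L1 eqxx.
  exists (\bigcap_n E n); split => //; split => //.
  move=> w Aw; exists 1%N => N hN.
  have ht : (fun i => taus i w) =1 (fun _ => tauS) := fun i => Aw i.+1 I i (ltnSn i).
  rewrite /hc_theta (eq_map ht); apply: sel_true => //.
  rewrite !L4 !big_map !sum_const size_iota /tauS; have [-> ->] := C1.
  lia.
- move=> m hm d Ω P demos rolls Hlaw.
  pose E n := [set w | (forall j, (j < m)%N -> demos j w = ddS j) /\
                       (forall i, (i < n)%N -> rolls i w = rr sel m i)].
  have [mA PA] : measurable (\bigcap_n E n) /\ P (\bigcap_n E n) = 1%E.
    apply: cap1 => n; have [mE PE] := Hlaw n ddS (rr sel m) => //.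
    rewrite PE big1 ?mul1r ?big1 // => i _.
      by rewrite [X in ptraj _ _ _ X](rrE sel m) L1 eqxx.
    by rewrite L1 eqxx.
  exists (\bigcap_n E n); split => //; split.
    by rewrite PA mul1r lee_fin expR_le1 oppr_le0 ler0n.
  move=> w Aw.
  have hd : forall j, (j < m)%N -> demos j w = ddS j := (Aw 0%N I).1.
  have hr : (fun i => rolls i w) =1 rr sel m := fun i => (Aw i.+1 I).2 i (ltnSn i).
  exists false; split => //; exists m.+1 => k hk.
  have -> : rc_theta ex_psup sel m (fun j => demos j w) (fun i => rolls i w) k =
            rc_theta ex_psup sel m ddS (rr sel m) k.
    rewrite /rc_theta (eq_map hr); congr (sel (labeled _ (_ ++ _))).
    by apply/eq_in_map => j; rewrite mem_iota add0n => /andP[_]; exact: hd.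
  rewrite rcE; apply: sel_false => //.
  rewrite !L4 !big_cat /= !big_map /ddS /tauS !sum_const size_iota; have [-> ->] := C1.
  rewrite sum_plus1 ?size_rrl.
    lia.
  move=> tau; rewrite -map_rr => /mapP[i _ ->].
  by rewrite rrE0 C2.
Qed.
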